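(* For all positive integers $n$ and $r$, \[ k(K_{rn}^{(r+1)};r)\leq k(n,r)\leq k(K_{rn}^{(r+1)};r)+5. \]
   Context: For a hypergraph $H=(V,E)$ (all hyperedges of size at least 2) and $r\in\mathbb N$, a colouring of the $r$-subsets of $V$ makes a hyperedge $e$ with $|e|\geq r+1$ monochromatic if all $r$-subsets of $e$ receive the same colour; $k(H;r)$ is the least $k$ for which there is a colouring of the $r$-subsets of $V$ with $k$ colours with no monochromatic hyperedge of size $\geq r+1$. $\chi(H)$ is the vertex chromatic number (least number of colours in a vertex colouring with no monochromatic hyperedge). $k(n,r)=\max\{k(H;r):\chi(H)=n\}$. $K_m^{(r+1)}$ is the complete $(r+1)$-uniform hypergraph on $m$ vertices. *)

(* Defs.v *)
From mathcomp Require Import all_boot.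
Set Implicit Arguments. Unset Strict Implicit. Unset Printing Implicit Defensive.

Definition is_hypergraph (V : finType) (E : {set {set V}}) : Prop :=
  forall e, e \in E -> 1 < #|e|.

Definition vmono (V : finType) k (f : {ffun V -> 'I_k}) (e : {set V}) : bool :=
  [forall x in e, forall y in e, f x == f y].

Definition vcolourable (V : finType) (E : {set {set V}}) (k : nat) : bool :=
  [exists f : {ffun V -> 'I_k}, [forall e in E, ~~ vmono f e]].

(* chi(H): least k with a proper vertex colouring. The search bound #|V|
   is always sufficient for a hypergraph (all edges of size >= 2):
   the colouring by distinct colours is proper. *)
Definition chi (V : finType) (E : {set {set V}}) : nat :=
  find (vcolourable E) (iota 0 #|V|.+1).

Definition rsub (V : finType) (r : nat) := {s : {set V} | #|s| == r}.

Definition rmono (V : finType) (r k : nat) (f : {ffun rsub V r -> 'I_k})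
  (e : {set V}) : bool :=
  [forall s : rsub V r, forall t : rsub V r,
     (val s \subset e) ==> (val t \subset e) ==> (f s == f t)].

Definition rcolourable (V : finType) (E : {set {set V}}) (r k : nat) : bool :=
  [exists f : {ffun rsub V r -> 'I_k},
     [forall e in E, (r.+1 <= #|e|) ==> ~~ rmono f e]].

(* k(H;r): least k with such a colouring of the r-subsets. The search bound
   #|{: rsub V r}| suffices when r >= 1 (distinct colours on all r-subsets). *)
Definition kcol (V : finType) (E : {set {set V}}) (r : nat) : nat :=
  find (rcolourable E r) (iota 0 #|{: rsub V r}|.+1).

Definition Kcomplete (m r : nat) : {set {set 'I_m}} :=
  [set e : {set 'I_m} | #|e| == r.+1].

(* Main.v *)
Require Import Defs.
From mathcomp Require Import all_boot zify.
Set Implicit Arguments. Unset Strict Implicit. Unset Printing Implicit Defensive.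

Lemma find_le (T : Type) (P : pred T) (s : seq T) x0 i :
  P (nth x0 s i) -> find P s <= i.
Proof. move=> Hi; rewrite leqNgt; apply/negP => /(before_find x0); by rewrite Hi. Qed.

Lemma ext_subset (T : finType) (A B : {set T}) k :
  B \subset A -> #|B| <= k -> k <= #|A| ->
  exists C : {set T}, [/\ B \subset C, C \subset A & #|C| = k].
Proof.
move=> BA Bk kA.
have [m Hm] : exists m, k = #|B| + m by exists (k - #|B|); lia.
move: kA; rewrite Hm; clear Hm Bk k; elim: m => [|m IH] kA; first by exists B; rewrite addn0.
have kA' : #|B| + m <= #|A| by lia.
have [C [BC CA cC]] := IH kA'.
have : C \proper A by rewrite properEcard CA cC /=; lia.
case/properP => _ [x xA xC].
exists (x |: C); split.
- exact: (subset_trans BC (subsetUr _ _)).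
- by rewrite subUset sub1set xA.
- by rewrite cardsU1 xC cC addnS.
Qed.

Lemma rmonoN (V : finType) r k (f : {ffun rsub V r -> 'I_k}) (e : {set V}) (s t : rsub V r) :
  val s \subset e -> val t \subset e -> f s != f t -> ~~ rmono f e.
Proof.
move=> se te ft; apply/negP => /forallP /(_ s) /forallP /(_ t).
by rewrite se te /= (negbTE ft).
Qed.

Lemma rcol_distinct (V : finType) (E : {set {set V}}) r : 0 < r ->
  rcolourable E r #|{: rsub V r}|.
Proof.
move=> r0; apply/existsP; exists [ffun s => enum_rank s].
apply/forall_inP => e _; apply/implyP => re.
have /card_gt1P [x [y [xe ye xy]]] : 1 < #|e| by lia.
have [S1 [xS1 S1e cS1]] : exists C : {set V}, [/\ [set x] \subset C, C \subset e & #|C| = r].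
  by apply: ext_subset; rewrite ?sub1set ?cards1 //; lia.
have [S2 [_ S2e cS2]] : exists C : {set V}, [/\ set0 \subset C, C \subset e :\ x & #|C| = r].
  apply: ext_subset; rewrite ?sub0set ?cards0 //.
  by move: re; rewrite (cardsD1 x e) xe; lia.
have h1 : #|S1| == r by apply/eqP.
have h2 : #|S2| == r by apply/eqP.
apply: (@rmonoN _ _ _ _ _ (Sub S1 h1) (Sub S2 h2)) => //=.
- by apply: (subset_trans S2e); apply: subD1set.
- rewrite !ffunE; apply/negP => /eqP /enum_rank_inj /(congr1 val) /= E12.
  move: xS1; rewrite sub1set E12 => /(subsetP S2e); by rewrite !inE eqxx.
Qed.

Lemma kcol_spec (V : finType) (E : {set {set V}}) r : 0 < r ->
  rcolourable E r (kcol E r).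
Proof.
move=> r0; rewrite /kcol.
have H : has (rcolourable E r) (iota 0 #|{: rsub V r}|.+1).
  apply/hasP; exists #|{: rsub V r}|; last exact: rcol_distinct.
  by rewrite mem_iota add0n ltnSn.
have Hs := H; rewrite has_find size_iota in Hs.
by have := nth_find 0 H; rewrite nth_iota // add0n.
Qed.

Lemma kcol_le (V : finType) (E : {set {set V}}) r k :
  rcolourable E r k -> kcol E r <= k.
Proof.
move=> Hk; rewrite /kcol.
have [lt|ge] := ltnP k (#|{: rsub V r}|.+1).
  by apply: (@find_le _ _ _ 0 k); rewrite nth_iota.
apply: leq_trans (find_size _ _) _; by rewrite size_iota.
Qed.

Lemma vcol_distinct (V : finType) (E : {set {set V}}) : is_hypergraph E ->
  vcolourable E #|V|.
Proof.
move=> HE; apply/existsP; exists [ffun v => enum_rank v].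
apply/forall_inP => e eE.
have /card_gt1P [x [y [xe ye xy]]] := HE e eE.
apply/negP => /forall_inP /(_ x xe) /forall_inP /(_ y ye).
by rewrite !ffunE => /eqP /enum_rank_inj /eqP; rewrite (negbTE xy).
Qed.

Lemma chi_spec (V : finType) (E : {set {set V}}) : is_hypergraph E ->
  vcolourable E (chi E).
Proof.
move=> HE; rewrite /chi.
have H : has (vcolourable E) (iota 0 #|V|.+1).
  apply/hasP; exists #|V|; last exact: vcol_distinct.
  by rewrite mem_iota add0n ltnSn.
have Hs := H; rewrite has_find size_iota in Hs.
by have := nth_find 0 H; rewrite nth_iota // add0n.
Qed.

Lemma pigeon (V : finType) k r (f : V -> 'I_k) : k * r < #|V| ->
  exists i, r < #|[set v | f v == i]|.
Proof.
move=> H; have [/existsP//|/existsPn Hn] := boolP [exists i, r < #|[set v | f v == i]|].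
exfalso.
move: H; rewrite -sum1_card (partition_big f predT) //=.
have : \sum_(j < k) \sum_(i in V | f i == j) 1 <= \sum_(j < k) r.
  apply: leq_sum => j _; rewrite sum1_card.
  have := Hn j; rewrite -leqNgt; apply: leq_trans; apply: subset_leq_card.
  by apply/subsetP => v; rewrite !inE.
rewrite sum_nat_const card_ord => h1 h2; move: (leq_trans h2 h1); by rewrite ltnn.
Qed.

Lemma chi_K n r : 0 < n -> 0 < r -> chi (Kcomplete (r * n) r) = n.
Proof.
move=> n0 r0.
set K := Kcomplete (r * n) r.
have HK : is_hypergraph K by move=> e; rewrite inE => /eqP ->; lia.
have Pn : vcolourable K n.
  have lt (v : 'I_(r * n)) : v %/ r < n.
    by rewrite ltn_divLR //; have := ltn_ord v; lia.
  apply/existsP; exists [ffun v => Ordinal (lt v)].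
  apply/forall_inP => e; rewrite inE => /eqP ce; apply/negP => Hm.
  pose h (v : 'I_(r * n)) : 'I_r := Ordinal (ltn_pmod v r0).
  have hinj : {in e &, injective h}.
    move=> x y xe ye /(congr1 val) /= hxy.
    move: Hm => /forall_inP /(_ x xe) /forall_inP /(_ y ye); rewrite !ffunE.
    move=> /eqP /(congr1 val) /= dxy.
    by apply: val_inj; rewrite /= (divn_eq x r) (divn_eq y r) dxy hxy.
  have := max_card (mem (h @: e)); rewrite card_in_imset // ce card_ord; lia.
have NP k : k < n -> ~~ vcolourable K k.
  move=> kn; apply/negP => /existsP [f /forall_inP Hf].
  have [i Hi] : exists i, r < #|[set v | f v == i]|.
    by apply: pigeon; rewrite card_ord; rewrite mulnC ltn_pmul2l.
  have [C [_ Cs cC]] : exists C : {set 'I_(r * n)},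
      [/\ set0 \subset C, C \subset [set v | f v == i] & #|C| = r.+1].
    by apply: ext_subset; rewrite ?sub0set ?cards0.
  have CK : C \in K by rewrite inE cC.
  move: (Hf C CK) => /negP; apply; apply/forall_inP => x xC; apply/forall_inP => y yC.
  move: (subsetP Cs x xC) (subsetP Cs y yC); rewrite !inE => /eqP -> /eqP ->.
  by [].
rewrite /chi.
have nlt : n < #|'I_(r * n)|.+1 by rewrite card_ord ltnS leq_pmull.
apply/eqP; rewrite eqn_leq; apply/andP; split.
  by apply: (@find_le _ _ _ 0 n); rewrite nth_iota.
rewrite leqNgt; apply/negP => Hlt.
have Hh : has (vcolourable K) (iota 0 #|'I_(r * n)|.+1).
  by rewrite has_find size_iota; apply: (leq_ltn_trans _ nlt); apply: (@find_le _ _ _ 0 n); rewrite nth_iota.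
have Hs := Hh; rewrite has_find size_iota in Hs.
have := nth_find 0 Hh; rewrite nth_iota //.
by rewrite add0n; apply/negP; apply: NP.
Qed.

Section Main.
Variables (V : finType) (n : nat) (c : V -> 'I_n).

Definition lonely (S : {set V}) (w : V) :=
  [forall w' in S, (c w' == c w) ==> (w' == w)].
Definition good (S : {set V}) v := [forall w in S, (c w <= c v) ==> lonely S w].
Definition dcnt (S : {set V}) := #|[set v in S | good S v]|.
Definition ecnt (S : {set V}) := #|[set v in S | [forall w in S, c v <= c w]]|.
Definition rb (S : {set V}) := [forall w in S, lonely S w].
Definition Fv (S : {set V}) : nat :=
  if dcnt S == 0 then 2 + odd (ecnt S) else odd (dcnt S).

Lemma Fv_lt S : Fv S < 4.
Proof. by rewrite /Fv; case: ifP; case: odd. Qed.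

Lemma lonely_sub S x w : lonely S w -> lonely (S :\ x) w.
Proof.
move=> /forall_inP H; apply/forall_inP => w' /setD1P [_ w'S]; exact: H.
Qed.

Lemma lonely_D1 S x w : c w != c x -> lonely (S :\ x) w -> lonely S w.
Proof.
move=> cwx /forall_inP H; apply/forall_inP => w' w'S; apply/implyP => e.
have [wx|nx] := eqVneq w' x.
  by move: e cwx; rewrite wx eq_sym => ->.
by move: (H w'); rewrite in_setD1 nx w'S e => /(_ isT).
Qed.

Lemma rbP S : rb S = (#|c @: S| == #|S|).
Proof.
apply/idP/imset_injP.
  move=> /forall_inP H x y xS yS cxy.
  by move: (H y yS) => /forall_inP /(_ x xS); rewrite cxy eqxx => /eqP.
move=> Hi; apply/forall_inP => w wS; apply/forall_inP => w' w'S.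
by apply/implyP => /eqP /(Hi _ _ w'S wS) ->.
Qed.

Lemma exists_min (a : {set V}) x : x \in a ->
  exists2 u, u \in a & forall w, w \in a -> c u <= c w.
Proof.
move=> xa.
case: (@arg_minnP _ x (fun w => w \in a) (fun w => nat_of_ord (c w)) xa) => u ua umin.
by exists u.
Qed.

Lemma exists_max (a : {set V}) x : x \in a ->
  exists2 u, u \in a & forall w, w \in a -> c w <= c u.
Proof.
move=> xa.
case: (@arg_maxnP _ x (fun w => w \in a) (fun w => nat_of_ord (c w)) xa) => u ua umax.
by exists u.
Qed.

Lemma minset_eq (S : {set V}) u : u \in S -> (forall w, w \in S -> c u <= c w) ->
  [set w in S | [forall w' in S, c w <= c w']] = [set w in S | c w == c u].
Proof.
move=> uS umin; apply/setP => w; rewrite !inE; case wS: (w \in S) => //=.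
apply/forall_inP/eqP.
  move=> /(_ u uS) H; apply: val_inj; apply/eqP; rewrite eqn_leq H; exact: umin.
by move=> -> w' w'S; apply: umin.
Qed.

Lemma not_lonely (S : {set V}) w : ~~ lonely S w ->
  exists2 w', w' \in S & (c w' == c w) && (w' != w).
Proof.
by move=> /forall_inPn [w' w'S]; rewrite negb_imply => H; exists w'.
Qed.

Lemma lonely2 (S : {set V}) w w' : w \in S -> w' \in S -> c w' = c w -> w' != w ->
  ~~ lonely S w.
Proof.
move=> wS w'S cw ne; apply/negP => /forall_inP /(_ w' w'S).
by rewrite cw eqxx (negbTE ne).
Qed.


Lemma key (a : {set V}) x y : x \in a -> y \in a -> c x != c y -> ~~ rb a ->
  exists u v, [/\ u \in a, v \in a &
    (rb (a :\ u) != rb (a :\ v)) ||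
    [&& ~~ rb (a :\ u), ~~ rb (a :\ v) & Fv (a :\ u) != Fv (a :\ v)]].
Proof.
move=> xa ya cxy nrb.
have [u ua umin] := exists_min xa.
have [d0|dn0] := eqVneq (dcnt a) 0.
-
  have nog w : w \in a -> ~~ good a w.
    move=> wa; apply/negP => gw.
    by move: (card0_eq d0 w); rewrite !inE wa gw.
  have /forall_inPn [w wa] := nog u ua.
  rewrite negb_imply => /andP [cwu nlw].
  have cwu' : c w = c u by apply: val_inj; apply/eqP; rewrite eqn_leq cwu umin.
  have [w' w'a /andP [/eqP cw' nw']] := not_lonely nlw.
  have [u' u'a /andP [nu' /eqP cu']] : exists2 u', u' \in a & (u' != u) && (c u' == c u).
    have [wu|wu] := eqVneq w u.
      by exists w' => //; rewrite -wu nw' /= cw' cwu' eqxx.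
    by exists w; rewrite // wu cwu' eqxx.
  have [v va cvu] : exists2 v, v \in a & c v != c u.
    have [e|e] := eqVneq (c x) (c u); last by exists x.
    by exists y => //; rewrite -e eq_sym.
  have uT : u \in a :\ v.
    by rewrite in_setD1 ua andbT; apply/eqP => e; move: cvu; rewrite e eqxx.
  have u'T : u' \in a :\ v.
    by rewrite in_setD1 u'a andbT; apply/eqP => e; move: cvu; rewrite -e cu' eqxx.
  have nlT : ~~ lonely (a :\ v) u := lonely2 uT u'T cu' nu'.
  have nrbT : ~~ rb (a :\ v).
    by apply/negP => /forall_inP /(_ u uT); apply/negP.
  have dT : dcnt (a :\ v) = 0.
    apply: eq_card0 => w0; rewrite !inE; apply/negP => /andP [/andP [_ w0a] /forall_inP /(_ u uT)].
    by rewrite umin //= => H; rewrite H in nlT.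
  have eT : ecnt (a :\ v) = #|[set w in a | c w == c u]|.
    rewrite /ecnt (minset_eq uT); last by move=> w0 /setD1P [_ ?]; apply: umin.
    apply: eq_card => z; rewrite !inE.
    have [->|] := eqVneq z v => //=; by rewrite va (negbTE cvu).
  have uM : u \in [set w in a | c w == c u] by rewrite inE ua eqxx.
  case: (boolP [exists u'', [&& u'' \in a, c u'' == c u, u'' != u & u'' != u']]).
  + move=> /existsP [u'' /and4P [u''a /eqP cu'' nu'' nu''']].
    have u'U : u' \in a :\ u by rewrite in_setD1 nu' u'a.
    have u''U : u'' \in a :\ u by rewrite in_setD1 nu'' u''a.
    have nlU : ~~ lonely (a :\ u) u' by apply: lonely2 u'U u''U _ nu'''; rewrite cu'' cu'.
    have nrbU : ~~ rb (a :\ u).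
      by apply/negP => /forall_inP /(_ u' u'U); apply/negP.
    have dU : dcnt (a :\ u) = 0.
      apply: eq_card0 => w0; rewrite !inE; apply/negP => /andP [/andP [_ w0a] /forall_inP /(_ u' u'U)].
      by rewrite cu' umin //= => H; rewrite H in nlU.
    have eU : ecnt (a :\ u) = #|[set w in a | c w == c u] :\ u|.
      rewrite /ecnt (minset_eq u'U); last by move=> w0 /setD1P [_ ?]; rewrite cu'; apply: umin.
      apply: eq_card => z; rewrite !inE cu'.
      by have [->|] := eqVneq z u.
    exists u, v; split => //; apply/orP; right.
    rewrite nrbU nrbT /Fv dU dT eU eT (cardsD1 u [set w in a | c w == c u]) uM /=.
    by rewrite add0n; case: odd.
  + move=> /existsPn Hno.
    have onlyM w0 : w0 \in a -> c w0 = c u -> w0 != u -> w0 = u'.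
      move=> w0a cw0 nw0; move: (Hno w0); rewrite w0a cw0 eqxx nw0 /=.
      by move/negbNE/eqP.
    case rbU: (rb (a :\ u)).
      by exists u, v; split => //; rewrite rbU (negbTE nrbT).
    have u'U : u' \in a :\ u by rewrite in_setD1 nu' u'a.
    have gU : good (a :\ u) u'.
      apply/forall_inP => w0 w0U; apply/implyP => le.
      move/setD1P: w0U => [nw0 w0a].
      have cw0 : c w0 = c u.
        by apply: val_inj; apply/eqP; rewrite eqn_leq umin // andbT -cu'.
      rewrite (onlyM w0 w0a cw0 nw0).
      apply/forall_inP => w1 /setD1P [nw1 w1a]; apply/implyP => /eqP cw1.
      by rewrite (onlyM w1 w1a _ nw1) // cw1 cu'.
    have dUn : dcnt (a :\ u) != 0.
      by rewrite -lt0n; apply/card_gt0P; exists u'; rewrite inE u'U gU.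
    exists u, v; split => //; apply/orP; right.
    rewrite rbU nrbT /Fv (negbTE dUn) dT /=.
    by case: odd; case: odd.
-
  have [v0] : exists v0, v0 \in [set v in a | good a v].
    by apply/card_gt0P; rewrite lt0n.
  rewrite inE => /andP [v0a gv0].
  have gu : good a u.
    apply/forall_inP => w wa; apply/implyP => le.
    by move: (forall_inP gv0 w wa); rewrite (leq_trans le (umin _ v0a)).
  have lu : lonely a u := implyP (forall_inP gu u ua) (leqnn _).
  have [v va vmax] := exists_max xa.
  have ngv : ~~ good a v.
    apply/negP => gv; move/negP: nrb; apply; apply/forall_inP => w wa.
    exact: (implyP (forall_inP gv w wa) (vmax w wa)).
  have [w wa nlw] : exists2 w, w \in a & ~~ lonely a w.
    by move/forall_inPn: nrb.
  have [w' w'a /andP [/eqP cw' nw']] := not_lonely nlw.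
  have wu : w != u by apply: (contraNneq _ nlw) => ->.
  have w'u : w' != u.
    apply/eqP => e; move: (forall_inP lu w wa); rewrite -cw' e eqxx /=.
    by rewrite (negbTE wu).
  have wU : w \in a :\ u by rewrite in_setD1 wu wa.
  have w'U : w' \in a :\ u by rewrite in_setD1 w'u w'a.
  have nrbU : ~~ rb (a :\ u).
    apply/negP => /forall_inP /(_ w wU); apply/negP; exact: lonely2 wU w'U cw' nw'.
  have good_U w0 : w0 \in a :\ u -> good (a :\ u) w0 = good a w0.
    move=> w0U; apply/idP/idP.
    - move=> /forall_inP g; apply/forall_inP => w1 w1a; apply/implyP => le.
      have [->|w1u] := eqVneq w1 u; first exact: lu.
      have w1U : w1 \in a :\ u by rewrite in_setD1 w1u w1a.
      apply: (@lonely_D1 a u); last exact: (implyP (g w1 w1U) le).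
      apply/negP => /eqP e; move: (forall_inP lu w1 w1a); rewrite e eqxx /=.
      by rewrite (negbTE w1u).
    - move=> /forall_inP g; apply/forall_inP => w1 w1U; apply/implyP => le.
      apply: lonely_sub; move/setD1P: w1U => [_ w1a].
      exact: (implyP (g w1 w1a) le).
  have sU : [set z in a :\ u | good (a :\ u) z] = [set z in a | good a z] :\ u.
    apply/setP => z; rewrite in_setD1 !inE.
    have [->|zu] := eqVneq z u => //=.
    case za: (z \in a) => //=; apply: good_U; by rewrite in_setD1 zu za.
  have dU : dcnt (a :\ u) = (dcnt a).-1.
    by rewrite /dcnt sU [in RHS](cardsD1 u) inE ua gu.
  case rbT: (rb (a :\ v)).
    by exists u, v; split => //; rewrite rbT (negbTE nrbU).
  have sT : [set z in a :\ v | good (a :\ v) z] = [set z in a | good a z].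
    apply/setP => z; rewrite !inE.
    have [->|zv] := eqVneq z v => /=; first by rewrite (negbTE ngv) andbF.
    case za: (z \in a) => //=; apply/idP/idP.
    - move=> gz.
      have czv : c z < c v.
        rewrite ltn_neqAle vmax // andbT; apply/negP => /eqP e.
        move: rbT; rewrite /rb => /negbT/negP; apply; apply/forall_inP => w1 w1T.
        apply: (implyP (forall_inP gz w1 w1T)); rewrite e; apply: vmax.
        by move/setD1P: w1T => [].
      apply/forall_inP => w1 w1a; apply/implyP => le.
      have cw1v : c w1 != c v.
        by apply/eqP => e; move: (leq_ltn_trans le czv); rewrite e ltnn.
      have w1T : w1 \in a :\ v.
        by rewrite in_setD1 w1a andbT; apply: contraNneq cw1v => ->.
      apply: (lonely_D1 cw1v); exact: (implyP (forall_inP gz w1 w1T) le).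
    - move=> gz; apply/forall_inP => w1 w1T; apply/implyP => le; apply: lonely_sub.
      move/setD1P: w1T => [_ w1a]; exact: (implyP (forall_inP gz w1 w1a) le).
  have dT : dcnt (a :\ v) = dcnt a by rewrite /dcnt sT.
  exists u, v; split => //; apply/orP; right.
  rewrite nrbU rbT /= /Fv dU dT (negbTE dn0).
  move: dn0; case: (dcnt a) => [//|d] _ /=.
  case: (d == 0); first by case: (odd d); case: (odd (ecnt _)).
  by case: (odd d).
Qed.

End Main.

Section Col.
Variables (V : finType) (n : nat) (c : V -> 'I_n) (r m p : nat).
Variables (emb : 'I_n -> 'I_m) (g : {ffun rsub 'I_m r -> 'I_p}).
Hypothesis emb_inj : injective emb.
Hypothesis Hg : forall e' : {set 'I_m}, #|e'| = r.+1 -> ~~ rmono g e'.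
Hypothesis r0 : 0 < r.

Definition colN (S : {set V}) : nat :=
  match (insub (emb @: (c @: S)) : option (rsub 'I_m r)) with
  | Some s => val (g s)
  | None => p + Fv c S
  end.

Lemma colN_lt (S : {set V}) : colN S < p + 4.
Proof.
rewrite /colN; case: insub => [s|]; last by rewrite ltn_add2l Fv_lt.
exact: (leq_trans (ltn_ord _) (leq_addr _ _)).
Qed.

Definition chiC : {ffun rsub V r -> 'I_(p + 4)} :=
  [ffun s => Ordinal (colN_lt (val s))].

Lemma colN_nrb (S : {set V}) : #|S| = r -> ~~ rb c S -> colN S = p + Fv c S.
Proof.
move=> cS nr; rewrite /colN insubF //; rewrite card_imset // -cS -rbP.
exact: negbTE.
Qed.

Lemma colN_rb (S : {set V}) : #|S| = r -> rb c S -> colN S < p.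
Proof.
move=> cS rS; rewrite /colN; case: insubP => [s _ _|]; first exact: ltn_ord.
by rewrite card_imset // -cS -rbP rS.
Qed.

Lemma colN_diff (S T : {set V}) : #|S| = r -> #|T| = r ->
  (rb c S != rb c T) || [&& ~~ rb c S, ~~ rb c T & Fv c S != Fv c T] ->
  colN S != colN T.
Proof.
move=> cS cT /orP [|/and3P [nS nT F]]; last by rewrite !colN_nrb // eqn_add2l.
case rS: (rb c S); case rT: (rb c T) => // _.
  move: (colN_rb cS rS); rewrite (colN_nrb cT) ?rT // => h; apply/eqP => e.
  by rewrite e in h; lia.
move: (colN_rb cT rT); rewrite (colN_nrb cS) ?rS // => h; apply/eqP => e.
by rewrite -e in h; lia.
Qed.

Lemma rb_sub (a S : {set V}) : S \subset a -> rb c a -> rb c S.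
Proof.
move=> Sa /forall_inP H; apply/forall_inP => w wS; apply/forall_inP => w' w'S.
exact: (forall_inP (H w (subsetP Sa w wS)) w' (subsetP Sa w' w'S)).
Qed.

Lemma main_edge (e : {set V}) x y : x \in e -> y \in e -> c x != c y ->
  r.+1 <= #|e| -> ~~ rmono chiC e.
Proof.
move=> xe ye cxy re.
have xy : x != y by apply: contraNneq cxy => ->.
have [a [xya ae ca]] : exists a : {set V}, [/\ [set x; y] \subset a, a \subset e & #|a| = r.+1].
  apply: ext_subset => //; first by rewrite subUset !sub1set xe ye.
  by rewrite cards2 xy.
have xa : x \in a by apply: (subsetP xya); rewrite !inE eqxx.
have ya : y \in a by apply: (subsetP xya); rewrite !inE eqxx orbT.
case: (boolP (rb c a)) => ra.
-
  have cC : #|emb @: (c @: a)| = r.+1 by rewrite card_imset // (eqP (etrans (esym (rbP c a)) ra)).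
  move: (Hg cC) => /forallPn [s /forallPn [t]].
  rewrite !negb_imply => /and3P [sC tC gst].
  have pre (s0 : rsub 'I_m r) : val s0 \subset emb @: (c @: a) ->
      exists S : rsub V r, [/\ val S \subset e & colN (val S) = val (g s0)].
    move=> s0C; pose S := [set w in a | emb (c w) \in val s0].
    have Sa : S \subset a by apply/subsetP => w; rewrite inE => /andP [].
    have eS : emb @: (c @: S) = val s0.
      rewrite -imset_comp; apply/setP => z; apply/imsetP/idP.
        by move=> [w]; rewrite inE => /andP [_ h] ->.
      move=> zs; move: (subsetP s0C z zs); rewrite -imset_comp => /imsetP [w wa /= ez].
      by exists w => //; rewrite inE wa -ez zs.
    have rS : rb c S := rb_sub Sa ra.
    have cS : #|S| == r.
      rewrite -(eqP (etrans (esym (rbP c S)) rS)) -(card_imset _ emb_inj) eS.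
      exact: (svalP s0).
    exists (Sub S cS); split => /=; first exact: subset_trans Sa ae.
    by rewrite /colN eS valK.
  have [S [Se cSv]] := pre s sC.
  have [T [Te cTv]] := pre t tC.
  apply: (rmonoN Se Te); rewrite !ffunE; apply/negP => /eqP /(congr1 val) /=.
  by rewrite cSv cTv => /val_inj /eqP; rewrite (negbTE gst).
- have [u [v [ua va H]]] := key xa ya cxy ra.
  have cU : #|a :\ u| == r by move: ca; rewrite (cardsD1 u) ua add1n => -[->].
  have cV : #|a :\ v| == r by move: ca; rewrite (cardsD1 v) va add1n => -[->].
  have sub z : a :\ z \subset e by apply: subset_trans (subD1set _ _) ae.
  pose U : rsub V r := exist _ (a :\ u) cU.
  pose W : rsub V r := exist _ (a :\ v) cV.
  apply: (@rmonoN _ _ _ _ _ U W (sub u) (sub v)).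
  rewrite !ffunE; apply/negP => /eqP /(congr1 val) /= /eqP.
  by apply/negP; apply: colN_diff => //; apply/eqP.
Qed.

End Col.

Theorem theorem4p2 (n r : nat) : 0 < n -> 0 < r ->
  (* k(K_{rn}^{(r+1)}; r) <= k(n,r) *)
  (exists (V : finType) (E : {set {set V}}),
      [/\ is_hypergraph E, chi E = n & kcol (Kcomplete (r * n) r) r <= kcol E r])
  /\
  (* k(n,r) <= k(K_{rn}^{(r+1)}; r) + 5 *)
  (forall (V : finType) (E : {set {set V}}),
      is_hypergraph E -> chi E = n ->
      kcol E r <= kcol (Kcomplete (r * n) r) r + 5).
Proof.
move=> n0 r0; split.
  exists 'I_(r * n), (Kcomplete (r * n) r); split => //; last exact: chi_K.
  by move=> e; rewrite inE => /eqP ->.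
move=> V E HE hchi.
have := chi_spec HE; rewrite hchi => /existsP [f /forall_inP Hf].
have := kcol_spec (Kcomplete (r * n) r) r0 => /existsP [g /forall_inP Hg0].
have Hg : forall e' : {set 'I_(r * n)}, #|e'| = r.+1 -> ~~ rmono g e'.
  by move=> e' ce; move: (Hg0 e'); rewrite inE ce eqxx leqnn => /(_ isT).
have emb_inj : injective (widen_ord (leq_pmull n r0)).
  by move=> i j /(congr1 val) /= /val_inj.
have H4 : rcolourable E r (kcol (Kcomplete (r * n) r) r + 4).
  apply/existsP; exists (chiC (fun v => f v) (widen_ord (leq_pmull n r0)) g).
  apply/forall_inP => e eE; apply/implyP => re.
  move/forall_inPn: (Hf e eE) => [x xe /forall_inPn [y ye nxy]].
  exact: (main_edge emb_inj Hg r0 xe ye nxy re).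
by apply: leq_trans (kcol_le H4) _; rewrite leq_add2l.
Qed.
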